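(* Let $G$ be a group and $\mathrm{Pr}(G)$ its predicatization in the language $\mathcal{L}_{g\text{-}pred}=\{M^{(3)},I^{(2)},E^{(1)}\}$. Then every direct power $\Pi\mathrm{Pr}(G)=\prod_{i\in I}\mathrm{Pr}(G)$ is $\mathcal{L}_{g\text{-}pred}(\Pi G)$-equationally Noetherian.
   Context: The predicatization $\mathrm{Pr}(G)$ is the structure with universe $G$ where $M(x,y,z)\Leftrightarrow xy=z$, $I(x,y)\Leftrightarrow x=y^{-1}$, $E(x)\Leftrightarrow x=1$. The direct power consists of all sequences $[g_i\mid i\in I]$, with each relation holding coordinatewise. $\mathcal{L}_{g\text{-}pred}(\Pi G)$ is the language extended by a constant symbol for every element of the direct power. An equation is an atomic formula of this language (a relation symbol applied to variables/constants, or an equality of two variables/constants); a system is any set of equations in a fixed finite set of variables; two systems are equivalent if they have the same solution set. A structure is $\mathcal{L}_{g\text{-}pred}(\Pi G)$-equationally Noetherian if every system is equivalent over it to a finite subsystem. *)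

(* Defs.v *)
From mathcomp Require Import all_boot.
From Stdlib Require Import List.
Set Implicit Arguments. Unset Strict Implicit. Unset Printing Implicit Defensive.

Definition is_group (G : Type) (mul : G -> G -> G) (inv : G -> G) (one : G) : Prop :=
  (forall x y z, mul (mul x y) z = mul x (mul y z)) /\
  (forall x, mul one x = x) /\ (forall x, mul x one = x) /\
  (forall x, mul (inv x) x = one) /\ (forall x, mul x (inv x) = one).

Record gpred_struct := GPredStruct {
  carrier : Type;
  relM : carrier -> carrier -> carrier -> Prop;
  relI : carrier -> carrier -> Prop;
  relE : carrier -> Prop }.

Definition Pr (G : Type) (mul : G -> G -> G) (inv : G -> G) (one : G) : gpred_struct :=
  {| carrier := G;
     relM := fun x y z => mul x y = z;
     relI := fun x y => x = inv y;
     relE := fun x => x = one |}.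

Definition direct_power (I : Type) (S : gpred_struct) : gpred_struct :=
  {| carrier := I -> carrier S;
     relM := fun x y z => forall i, relM (x i) (y i) (z i);
     relI := fun x y => forall i, relI (x i) (y i);
     relE := fun x => forall i, relE (x i) |}.

Inductive term (n : nat) (C : Type) :=
| TVar of 'I_n
| TConst of C.

(* Equations = atomic formulas. *)
Inductive equation (n : nat) (C : Type) :=
| EqM of term n C & term n C & term n C
| EqI of term n C & term n C
| EqE of term n C
| EqEq of term n C & term n C.

Definition eval_term (S : gpred_struct) n (v : 'I_n -> carrier S)
  (t : term n (carrier S)) : carrier S :=
  match t with TVar x => v x | TConst c => c end.

Definition sat (S : gpred_struct) n (v : 'I_n -> carrier S)
  (e : equation n (carrier S)) : Prop :=
  match e with
  | EqM a b c => relM (eval_term v a) (eval_term v b) (eval_term v c)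
  | EqI a b => relI (eval_term v a) (eval_term v b)
  | EqE a => relE (eval_term v a)
  | EqEq a b => eval_term v a = eval_term v b
  end.

Definition solutions (S : gpred_struct) n (Sys : equation n (carrier S) -> Prop)
  : ('I_n -> carrier S) -> Prop :=
  fun v => forall e, Sys e -> sat v e.

(* S is L(S)-equationally Noetherian (constants = all elements of S):
   every system is equivalent to a finite subsystem. *)
Definition eq_noetherian_with_consts (S : gpred_struct) : Prop :=
  forall n (Sys : equation n (carrier S) -> Prop),
    exists l : list (equation n (carrier S)),
      (forall e, List.In e l -> Sys e) /\
      (forall v, solutions Sys v <-> solutions (fun e => List.In e l) v).

(* Main.v *)
Require Import Defs.
From mathcomp Require Import all_boot.
From Stdlib Require Import Classical.
Set Implicit Arguments. Unset Strict Implicit.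

Definition tsh n C (t : term n C) : option 'I_n :=
  match t with TVar x => Some x | TConst _ => None end.

Notation shape_t n := (prod (prod (prod (prod bool bool) (option 'I_n)) (option 'I_n)) (option 'I_n)).
Definition eshape n C (e : equation n C) : shape_t n :=
  match e with
  | EqM a b c => (false, false, tsh a, tsh b, tsh c)
  | EqI a b => (false, true, tsh a, tsh b, None)
  | EqE a => (true, false, tsh a, None, None)
  | EqEq a b => (true, true, tsh a, tsh b, None)
  end.

Section G.
Variables (G : Type) (mul : G -> G -> G) (inv : G -> G) (one : G).
Hypothesis HG : is_group mul inv one.

Lemma rcan a a' y : mul a y = mul a' y -> a = a'.
Proof.
case: HG => As [L1 [R1 [LV RV]]] H.
by rewrite -(R1 a) -(R1 a') -(RV y) -!As H.
Qed.

Lemma lcan a y y' : mul a y = mul a y' -> y = y'.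
Proof.
case: HG => As [L1 [R1 [LV RV]]] H.
by rewrite -(L1 y) -(L1 y') -(LV a) !As H.
Qed.

Lemma determ (J : Type) n (e1 e2 : equation n (carrier (direct_power J (Pr mul inv one))))
  (v w : 'I_n -> carrier (direct_power J (Pr mul inv one))) :
  eshape e1 = eshape e2 -> sat v e1 -> sat v e2 -> sat w e1 -> sat w e2.
Proof.
case: e1 => [a b c|a b|a|a b]; case: e2 => [a' b' c'|a' b'|a'|a' b'] //=;
  try (case: a => [a|a]); try (case: b => [b|b]); try (case: c => [c|c]);
  try (case: a' => [a'|a']); try (case: b' => [b'|b']); try (case: c' => [c'|c']);
  move=> //= [] //; intros; subst => //=; simpl in *.
all: repeat match goal with H : forall x : ?A, @eq _ _ _, j : ?A |- _ => specialize (H j) end.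
all: try congruence.




all: first
  [ match goal with H1 : mul ?x ?y = ?z, H2 : mul ?x ?y' = ?z |- _ =>
      lazymatch y with y' => fail | _ => have := lcan (etrans H1 (esym H2)) end end
  | match goal with H1 : mul ?x ?y = ?z, H2 : mul ?x' ?y = ?z |- _ =>
      lazymatch x with x' => fail | _ => have := rcan (etrans H1 (esym H2)) end end ];
  congruence.
Qed.

Lemma induct (J : Type) n (Sys : equation n (carrier (direct_power J (Pr mul inv one))) -> Prop)
  (L : seq (shape_t n)) :
  exists l : seq (equation n (carrier (direct_power J (Pr mul inv one)))),
    (forall e, List.In e l -> Sys e) /\
    (forall w, (forall e, List.In e l -> sat w e) ->
       forall e, Sys e -> eshape e \in L -> sat w e).
Proof.
elim: L => [|s L [l [Hl1 Hl2]]].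
  by exists nil; split.
case: (classic (exists e1, Sys e1 /\ eshape e1 = s)); last first.
  move=> Hno; exists l; split => // w Hw e He; rewrite in_cons => /orP [/eqP Es|]; last exact: Hl2.
  by case: Hno; exists e.
move=> [e1 [Se1 Es1]].
case: (classic (exists e2, Sys e2 /\ eshape e2 = s /\ ~ exists v, sat v e1 /\ sat v e2)).
  move=> [e2 [Se2 [Es2 Hd]]]; exists (e1 :: e2 :: l); split.
    by move=> e /= [<-|[<-|]] //; apply: Hl1.
  move=> w Hw; case: Hd; exists w; split; apply: Hw; simpl; tauto.
move=> Hno; exists (e1 :: l); split.
  by move=> e /= [<-|] //; apply: Hl1.
move=> w Hw e He; rewrite in_cons => /orP [/eqP Es|]; last first.
  by apply: Hl2 => // e' He'; apply: Hw; right.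
have [v [Hv1 Hv2]] : exists v, sat v e1 /\ sat v e.
  apply: NNPP => H; apply: Hno; exists e; split => //; split => //.
apply: (determ (e1 := e1)) Hv1 Hv2 _; first by rewrite Es1 Es.
by apply: Hw; left.
Qed.
End G.

Theorem corollary1 (G : Type) (mul : G -> G -> G) (inv : G -> G) (one : G)
  (HG : is_group mul inv one) (I : Type) :
  eq_noetherian_with_consts (direct_power I (Pr mul inv one)).
Proof.
move=> n Sys.
have [l [H1 H2]] := induct HG Sys (enum {: shape_t n}).
exists l; split => // v; split.
  by move=> Hv e He; apply: Hv; apply: H1.
move=> Hv e He; apply: (H2 v Hv e He); exact: mem_enum.
Qed.
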